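(* Let $X\ge 0$ be a random variable with $\mathbb{E}X<\infty$ and distribution function $F_X$. The set $\mathcal{I}_c$, with the norm $\|I\|_1=\int_0^\infty |I(x)|\,dF_X(x)$ and modulo functions equal to $0$ $F_X$-almost everywhere, is a compact subset of the normed space $L^1(F_X)$.
   Context: $\mathcal{I}_c$ denotes the set of functions $I:[0,\infty)\to[0,\infty)$ with $0\le I(x)\le x$ for all $x \ge 0$ and $0 \le I(x)-I(y) \le x-y$ for all $0\le y\le x$. *)

(* Defs.v *)
From HB Require Import structures.
From mathcomp Require Import all_boot all_order all_algebra.
From mathcomp Require Import all_classical all_reals all_analysis.
Set Implicit Arguments. Unset Strict Implicit. Unset Printing Implicit Defensive.
Import Order.TTheory GRing.Theory Num.Theory.
Import numFieldNormedType.Exports.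
Local Open Scope classical_set_scope.
Local Open Scope ring_scope.

(* The class I_c of functions [0,oo) -> [0,oo); functions are represented as
   R -> R and only their values on [0,oo) matter. *)
Definition Ic (R : realType) : set (R -> R) :=
  [set I | (forall x : R, 0 <= x -> 0 <= I x <= x) /\
           (forall x y : R, 0 <= y -> y <= x -> 0 <= I x - I y <= x - y)].

Definition L1space (R : realType) (mu : {measure set R -> \bar R}) : set (R -> R) :=
  [set f : R -> R | measurable_fun `[0%R : R, +oo[%classic f /\
           (\int[mu]_(x in `[0%R : R, +oo[%classic) (`|f x|)%:E < +oo)%E].

Definition L1dist (R : realType) (mu : {measure set R -> \bar R}) (f g : R -> R)
  : \bar R := (\int[mu]_(x in `[0%R : R, +oo[%classic) (`|f x - g x|)%:E)%E.

(* Identifying functions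
   equal mu-a.e. (i.e. passing to the normed quotient L^1(mu)) does not change
   which sets of functions are open/compact, since the quotient map is open
   and onto. *)
Definition L1open (R : realType) (mu : {measure set R -> \bar R})
  (U : set (R -> R)) : Prop :=
  forall f, U f -> exists2 e : R, 0 < e &
    forall g, L1space mu g -> (L1dist mu f g < e%:E)%E -> U g.

Definition L1compact (R : realType) (mu : {measure set R -> \bar R})
  (S : set (R -> R)) : Prop :=
  S `<=` L1space mu /\
  forall (J : Type) (U : J -> set (R -> R)),
    (forall j, L1open mu (U j)) -> S `<=` \bigcup_j U j ->
    exists (n : nat) (h : 'I_n -> J), S `<=` \bigcup_k U (h k).

(* Main.v *)
Require Import Defs.
From HB Require Import structures.
From mathcomp Require Import all_boot all_order all_algebra.
From mathcomp Require Import all_classical all_reals all_analysis.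
From mathcomp Require Import lra measurable_realfun.
Import Order.TTheory GRing.Theory Num.Theory.
Import numFieldNormedType.Exports.
Local Open Scope classical_set_scope.
Local Open Scope ring_scope.
Set Implicit Arguments. Unset Strict Implicit. Unset Printing Implicit Defensive.
Section Basics.
Variable R : realType.
Implicit Types (I f g : R -> R) (x y : R).

Definition Nz f : R -> R := fun x => if 0 <= x then f x else 0.

Lemma Ic_bnd f x : Ic f -> 0 <= x -> 0 <= f x <= x.
Proof. by case=> + _; apply. Qed.

Lemma Ic_lip f x y : Ic f -> 0 <= y -> y <= x -> 0 <= f x - f y <= x - y.
Proof. by case=> _; apply. Qed.

Lemma Nz_Ic f : Ic f -> Ic (Nz f).
Proof.
move=> If; split=> [x x0|x y y0 yx]; rewrite /Nz.
  by rewrite x0; apply: Ic_bnd.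
by rewrite y0 (le_trans y0 yx); apply: Ic_lip.
Qed.

Lemma Nz_eq f x : 0 <= x -> Nz f x = f x.
Proof. by rewrite /Nz => ->. Qed.

Lemma Nz_lip f x y : Ic f -> `|Nz f x - Nz f y| <= `|x - y|.
Proof.
move=> If.
wlog yx : x y / y <= x.
  move=> H; have [/H//|/ltW/H] := leP y x.
  by rewrite distrC [X in _ <= X]distrC.
rewrite /Nz; have [y0|y0] := leP 0 y.
  rewrite (le_trans y0 yx).
  have /andP[h1 h2] := Ic_lip If y0 yx.
  by rewrite (ger0_norm h1) ger0_norm ?subr_ge0.
have [x0|x0] := leP 0 x.
  have /andP[h3 h4] := Ic_bnd If x0.
  rewrite subr0 !ger0_norm ?subr_ge0 //; lra.
by rewrite subrr normr0.
Qed.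

Lemma Nz_cont f : Ic f -> continuous (Nz f).
Proof.
move=> If x; apply/cvgrPdist_lt => e e0; near=> z.
apply: (le_lt_trans (Nz_lip _ _ If)).
by near: z; apply: cvgr_dist_lt.
Unshelve. all: by end_near.
Qed.

Lemma Ic_meas f : Ic f -> measurable_fun `[0%R : R, +oo[%classic f.
Proof.
move=> If; apply: (@eq_measurable_fun _ _ _ _ _ (Nz f)).
  by move=> x; rewrite inE /= in_itv /= andbT => x0; rewrite Nz_eq.
apply: (measurable_funS _ _ (continuous_measurable_fun (Nz_cont If))) => //.
Qed.

End Basics.

Section Analysis.
Variable R : realType.
Variable mu : {measure set R -> \bar R}.
Local Notation D := (`[0%R : R, +oo[%classic).
Hypothesis Hint : (\int[mu]_(x in D) x%:E < +oo)%E.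

Lemma mD : measurable D.
Proof. exact: measurable_itv. Qed.

Lemma inD x : D x -> 0 <= x.
Proof. by rewrite /= in_itv /= andbT. Qed.

Lemma Ic_L1 f : Ic f -> L1space mu f.
Proof.
move=> If; split; first exact: Ic_meas.
apply: le_lt_trans Hint; apply: (ge0_le_integral mu mD).
- by move=> x _; rewrite lee_fin.
- apply/measurable_EFinP.
  exact: (measurableT_comp (@normr_measurable R setT) (Ic_meas If)).
- by apply/measurable_EFinP; exact: measurable_id.
- move=> x /inD x0; rewrite lee_fin.
  by have /andP[h1 h2] := Ic_bnd If x0; rewrite ger0_norm.
Qed.

Lemma Ic_absdiff (f g : R -> R) (x : R) : Ic f -> Ic g -> 0 <= x -> `|f x - g x| <= x.
Proof.
move=> If Ig x0; have /andP[h1 h2] := Ic_bnd If x0.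
have /andP[h3 h4] := Ic_bnd Ig x0.
rewrite ler_norml; apply/andP; split; lra.
Qed.

Lemma grid_bound (f g : R -> R) (m : nat) (x : R) : Ic f -> Ic g -> (0 < m)%N -> 0 <= x -> x < m%:R ->
 (forall k : 'I_(m * m).+1, `|f (k%:R / m%:R) - g (k%:R / m%:R)| < m%:R^-1) ->
 `|f x - g x| <= 3 / m%:R.
Proof.
move=> If Ig m0 x0 xm H.
have m0' : 0 < (m%:R : R) by rewrite ltr0n.
have xm0 : 0 <= x * m%:R by rewrite mulr_ge0 // ltW.
have /andP[hk1 hk2] := truncn_itv xm0.
set k := Num.truncn (x * m%:R) in hk1 hk2.
have km : (k < (m * m).+1)%N.
  rewrite ltnS -(ler_nat R) natrM; apply: (le_trans hk1); apply: ltW.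
  by rewrite ltr_pM2r.
have := H (Ordinal km) => /=; set y := k%:R / m%:R => Hy.
have y0 : 0 <= y by rewrite divr_ge0 // ltW.
have yx : y <= x by rewrite /y ler_pdivrMr.
have xy : x < y + m%:R^-1.
  have : x < (k.+1)%:R / m%:R by rewrite ltr_pdivlMr.
  by rewrite -natr1 mulrDl mul1r.
have /andP[a1 a2] := Ic_lip If y0 yx.
have /andP[b1 b2] := Ic_lip Ig y0 yx.
move: Hy; rewrite ltr_norml => /andP[c1 c2].
set t := m%:R^-1 in xy c1 c2 *.
rewrite ler_norml; apply/andP; split; lra.
Qed.

End Analysis.

Section Analysis2.
Variable R : realType.
Variable mu : {measure set R -> \bar R}.
Local Notation D := (`[0%R : R, +oo[%classic).
Hypothesis Hint : (\int[mu]_(x in D) x%:E < +oo)%E.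

Definition gridP (f g : R -> R) (m : nat) :=
  forall k : 'I_(m * m).+1, `|f (k%:R / m%:R) - g (k%:R / m%:R)| < m%:R^-1.

Lemma grid_L1 (f : R -> R) (e : R) : Ic f -> 0 < e ->
  exists m : nat, (0 < m)%N /\ forall g, Ic g -> gridP f g m ->
    (L1dist mu f g < e%:E)%E.
Proof.
move=> If e0; apply: contrapT => H.
have H' n : exists g, [/\ Ic g, gridP f g n.+1 & (e%:E <= L1dist mu f g)%E].
  apply: contrapT => nH; apply: H; exists n.+1; split => // g Ig Hg.
  rewrite ltNge; apply/negP => le; apply: nH; by exists g.
have [G HG] := choice H'.
pose fn n x := (`|f x - G n x|)%:E.
have mfn n : measurable_fun D (fn n).
  apply/measurable_EFinP.
  have [Ig _ _] := HG n.
  exact: (measurableT_comp (@normr_measurable R setT)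
           (measurable_funB (Ic_meas If) (Ic_meas Ig))).
have mf0 : measurable_fun D (cst (0 : \bar R)) by [].
have ff : {ae mu, forall x, D x -> fn ^~ x @ \oo --> (cst (0 : \bar R)) x}.
  apply: aeW => x /inD x0; apply/fine_cvgP; split.
    by near=> n.
  rewrite /=.
  have h3 : (fun n : nat => 3 * (n.+1%:R : R)^-1) @ \oo --> 0.
    have hh : (fun=> (3:R)) @ \oo --> (3:R) by exact: cvg_cst.
    have := cvgM hh (@cvg_harmonic R); rewrite mulr0.
    by move=> hh2; exact: hh2.
  apply: (squeeze_cvgr (f := fun=> 0) _ (cvg_cst _) h3).
  near=> n; rewrite /fn /= normr_ge0 /=.
  have [Ig Hg _] := HG n.
  apply: (grid_bound If Ig) => //.
  near: n.
  exists (Num.truncn x) => // n /= Hn.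
  have /andP[_ hx] := truncn_itv x0.
  by apply: (lt_le_trans hx); rewrite ler_nat ltnS.
have ig : mu.-integrable D EFin.
  apply/integrableP; split; first by apply/measurable_EFinP; exact: measurable_id.
  apply: le_lt_trans Hint; rewrite le_eqVlt; apply/orP; left; apply/eqP.
  apply: eq_integral => x /[!inE] /inD x0.
  by rewrite abse_EFin ger0_norm.
have fg : {ae mu, forall x n, D x -> `|fn n x| <= x%:E}%E.
  apply: aeW => x n /inD x0; rewrite /fn abse_EFin lee_fin normr_id.
  by have [Ig _ _] := HG n; apply: Ic_absdiff.
have [_ _ h] := @dominated_convergence _ _ _ mu D (@mD R) fn (cst 0%E) EFin mfn mf0 ff ig fg.
rewrite integral0 in h.
have /fine_cvgP[hfin hcv] := h.
have [N _ HN] := filterI hfin (cvgr_lt 0 hcv e e0).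
have [/= fin lt] := HN N (leqnn N).
have [_ _ le] := HG N.
move: le; rewrite /L1dist -/(fn N) -(fineK fin) lee_fin.
by rewrite leNgt lt.
Unshelve. all: by end_near.
Qed.

End Analysis2.
Section Topo.
Variable R : realType.
Lemma closed_lip (a b : R) :
  closed [set f : {ptws R -> R} | 0 <= f a - f b <= a - b].
Proof.
have e : [set f : {ptws R -> R} | 0 <= f a - f b <= a - b] = (fun f : {ptws R -> R} => f a - f b) @^-1` `[0, a - b].
  by apply/seteqP; split => f /=; rewrite in_itv.
rewrite e.
apply: preimage_closed. 
  move=> f _.
  have h1 := (@proj_continuous R (fun=> R) a f).
  have h2 := (@proj_continuous R (fun=> R) b f).
  have h := @cvgB _ _ _ (nbhs f) (nbhs_filter f) _ _ _ _ h1 h2.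
  exact: h.
exact: itv_closed.
Qed.

Definition Kset : set {ptws R -> R} := [set f | Ic f /\ forall x, x < 0 -> f x = 0].

Lemma Kset_compact : compact Kset.
Proof.
have Box : compact [set f : {ptws R -> R} | forall x, `[0, Num.max 0 x]%classic (f x)].
  have := (@tychonoff R (fun=> R) (fun x => `[0, Num.max 0 x]%classic) (fun x => @segment_compact R 0 (Num.max 0 x))).
  move=> h; exact h.
have C : closed (\bigcap_(p in [set p : R * R | 0 <= p.2 <= p.1])
                   [set f : {ptws R -> R} | 0 <= f p.1 - f p.2 <= p.1 - p.2]).
  by apply: closed_bigI => p _; exact: closed_lip.
have -> : Kset = [set f : {ptws R -> R} | forall x, `[0, Num.max 0 x]%classic (f x)] `&`
   (\bigcap_(p in [set p : R * R | 0 <= p.2 <= p.1])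
                   [set f : {ptws R -> R} | 0 <= f p.1 - f p.2 <= p.1 - p.2]).
  apply/seteqP; split => f /=.
    move=> [If fneg]; split.
      move=> x; rewrite in_itv /=; have [x0|x0] := leP 0 x.
        exact: Ic_bnd.
      by rewrite fneg // lexx.
    by move=> [a b] /= /andP[b0 ba]; exact: Ic_lip.
  move=> [hb hc]; split; first split.
  - by move=> x x0; have := hb x; rewrite in_itv /= (max_r x0).
  - by move=> x y y0 yx; apply: (hc (x, y)) => /=; rewrite y0 yx.
  - move=> x x0; have := hb x; rewrite in_itv /= (max_l (ltW x0)).
    by move=> h; apply/eqP; rewrite eq_le andbC.
exact: compact_closedI.
Qed.

End Topo.

Section Main.
Variable R : realType.
HB.instance Definition _ := Pointed.copy {ptws R -> R} (R -> R).
Variable mu : {measure set R -> \bar R}.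
Local Notation D := (`[0%R : R, +oo[%classic).
Hypothesis Hint : (\int[mu]_(x in D) x%:E < +oo)%E.

Lemma near_L1 (f : {ptws R -> R}) (e : R) : Ic f -> 0 < e ->
  \forall h \near f, Kset h -> (L1dist mu f h < e%:E)%E.
Proof.
move=> If e0.
have [m [m0 Hm]] := grid_L1 Hint If e0.
have mi0 : 0 < (m%:R : R)^-1 by rewrite invr_gt0 ltr0n.
have : \forall h \near f, forall k : 'I_(m * m).+1,
    `|f (k%:R / m%:R) - h (k%:R / m%:R)| < m%:R^-1.
  apply: (filter_forall (nbhs_filter f)) => k.
  exact: (@cvgr_dist_lt _ _ _ (nbhs f) (nbhs_filter f) _ _
     (@proj_continuous R (fun=> R) (k%:R / m%:R) f) _ mi0).
move=> hn.
apply: (@filterS _ (nbhs f) (nbhs_filter f) _ _ _ hn) => h Hh [Ih _].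
exact: Hm.
Qed.

Lemma Nz_K (I : R -> R) : Ic I -> Kset (Nz I).
Proof.
move=> HI; split; first exact: Nz_Ic.
by move=> x x0; rewrite /Nz leNgt x0.
Qed.

Lemma L1dist_Nz (I : R -> R) : L1dist mu (Nz I) I = 0%E.
Proof.
rewrite /L1dist (eq_integral (cst 0%E)) ?integral0 // => x /[!inE] /inD x0.
by rewrite Nz_eq // subrr normr0.
Qed.

Lemma L1compact_gen : L1compact mu (@Ic R).
Proof.
split; first by move=> f If; exact: Ic_L1.
move=> J U Uo cov.
pose W (j : {classic J}) : set {ptws R -> R} := interior [set h | Kset h -> U j h].
have := Kset_compact (R := R); rewrite (compact_cover {ptws R -> R}) => /(_ {classic J} setT W).
case => [j _|f [If fneg]|D' _ HD'].
- exact: open_interior.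
- have [j _ Ujf] := cov f If.
  exists j => //; rewrite /W /interior.
  have [e e0 He] := Uo j f Ujf.
  have hn := near_L1 If e0.
  apply: (@filterS _ (nbhs f) (nbhs_filter f) _ _ _ hn) => h hh Kh.
  by apply: He; [exact: (Ic_L1 Hint Kh.1) | exact: hh].
pose s : seq {classic J} := finmap.enum_fset D'.
exists (size s), (fun k => tnth (in_tuple s) k).
move=> I HI.
have [j Dj Wj] := HD' _ (Nz_K HI).
have Uj : U j (Nz I) := interior_subset Wj (Nz_K HI).
have [e e0 He] := Uo j _ Uj.
have UjI : U j I.
  by apply: He; [exact: (Ic_L1 Hint HI) | rewrite L1dist_Nz lte_fin].
have kS : (index j s < size s)%N by rewrite index_mem; exact: Dj.
exists (Ordinal kS) => //=.
by rewrite (tnth_nth j) /= nth_index.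
Qed.

End Main.

Theorem lemma2p3 (d : measure_display) (T : measurableType d) (R : realType)
  (P : probability T R) (X : {RV P >-> R}) :
  (forall w, 0 <= X w) -> ('E_P[X] < +oo)%E ->
  L1compact (distribution P X) (@Ic R).
Proof.
move=> X0 EX.
apply: L1compact_gen.
apply: le_lt_trans EX.
have mabs : measurable_fun [set: R] (fun x : R => (`|x|)%:E).
  by apply/measurable_EFinP; exact: normr_measurable.
apply: (@le_trans _ _ (\int[distribution P X]_(x in [set: R]) (`|x|)%:E)%E).
  rewrite (@eq_integral _ _ _ (distribution P X) _ (fun x : R => (`|x|)%:E)).
    apply: (ge0_subset_integral (distribution P X) (@mD R)) => //.
  by move=> x /[!inE] /inD x0; rewrite ger0_norm.
rewrite ge0_integral_distribution //.
rewrite unlock le_eqVlt; apply/orP; left; apply/eqP.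
by apply: eq_integral => w _ /=; rewrite ger0_norm.
Qed.
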